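(* Let $G$ be a group with a non-elementary action by isometries on a geodesic $\delta$-hyperbolic space $X$, and let $o\in X$ be a base point. For any $0<\epsilon<1$ there exists $C$ such that for any $D$ there is a finite set $S\subseteq G$ of loxodromic elements which is $(\epsilon,C,D)$-Schottky and moreover: (1) the sets $V_C(s^+)$ for distinct $s\in S$ are pairwise disjoint; (2) $so\in V_{C+\delta}(s^+)$ for each $s\in S$.
   Context: Gromov product $(x,y)_z=\frac12(d(x,z)+d(y,z)-d(x,y))$, extended to a boundary point $\xi\in\partial X$ in the standard way via sequences converging to $\xi$. An element $g$ is loxodromic if $\lim_n d(g^no,o)/n>0$; then $g^+\in\partial X$ denotes its attracting fixed point, and $V_C(g^+)=\{x\in X:(x,g^+)_o\ge C\}$. The action is non-elementary if $G$ contains two loxodromic elements with disjoint fixed sets in $\partial X$. A finite set $S$ is $(\epsilon,C,D)$-Schottky if for all $x,y\in X$, $\#\{s\in S:(x,sy)_o\le C\}\ge(1-\epsilon)\#S$ and $\#\{s\in S:(x,s^{-1}y)_o\le C\}\ge(1-\epsilon)\#S$, and $d(o,so)\ge D$ for all $s\in S$. *)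

(* Defs.v *)
From Stdlib Require Import Reals List.
From Coquelicot Require Import Coquelicot.
Import ListNotations.
Open Scope R_scope.

Section Defs.
Context {X G : Type}.

Definition is_metric (d : X -> X -> R) : Prop :=
  (forall x y, 0 <= d x y) /\ (forall x y, d x y = 0 <-> x = y) /\
  (forall x y, d x y = d y x) /\ (forall x y z, d x z <= d x y + d y z).

Definition geodesic (d : X -> X -> R) : Prop :=
  forall x y, exists gam : R -> X, gam 0 = x /\ gam (d x y) = y /\
    forall s t, 0 <= s <= d x y -> 0 <= t <= d x y ->
      d (gam s) (gam t) = Rabs (s - t).

Definition gprod (d : X -> X -> R) (x y z : X) : R :=
  (d x z + d y z - d x y) / 2.

Definition hyperbolic (d : X -> X -> R) (delta : R) : Prop :=
  0 <= delta /\
  forall x y z w, Rmin (gprod d x y w) (gprod d y z w) - delta <= gprod d x z w.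

Definition conv_inf (d : X -> X -> R) (o : X) (u : nat -> X) : Prop :=
  forall M, exists N, forall n m, (N <= n)%nat -> (N <= m)%nat ->
    M <= gprod d (u n) (u m) o.

Definition seq_equiv (d : X -> X -> R) (o : X) (u v : nat -> X) : Prop :=
  forall M, exists N, forall n m, (N <= n)%nat -> (N <= m)%nat ->
    M <= gprod d (u n) (v m) o.

(* A boundary point is an equivalence class of sequences converging to
   infinity, represented as a predicate on sequences. *)
Definition bd_class (d : X -> X -> R) (o : X) (u : nat -> X) : (nat -> X) -> Prop :=
  fun v => conv_inf d o v /\ seq_equiv d o u v.

Definition is_bd_point (d : X -> X -> R) (o : X) (xi : (nat -> X) -> Prop) : Prop :=
  exists u, conv_inf d o u /\ forall v, xi v <-> bd_class d o u v.

Definition gprod_bd (d : X -> X -> R) (o x : X) (xi : (nat -> X) -> Prop) : Rbar :=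
  Lub_Rbar (fun r => exists u, xi u /\
                     LimInf_seq (fun n => gprod d x (u n) o) = Finite r).

Definition is_group (mul : G -> G -> G) (one : G) (inv : G -> G) : Prop :=
  (forall a b c, mul a (mul b c) = mul (mul a b) c) /\
  (forall a, mul one a = a) /\ (forall a, mul a one = a) /\
  (forall a, mul (inv a) a = one) /\ (forall a, mul a (inv a) = one).

Definition isometric_action (d : X -> X -> R) (mul : G -> G -> G) (one : G)
  (act : G -> X -> X) : Prop :=
  (forall x, act one x = x) /\
  (forall g h x, act (mul g h) x = act g (act h x)) /\
  (forall g x y, d (act g x) (act g y) = d x y).

Definition gpow (mul : G -> G -> G) (one : G) (g : G) (n : nat) : G :=
  Nat.iter n (mul g) one.

Definition loxodromic (d : X -> X -> R) (mul : G -> G -> G) (one : G)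
  (act : G -> X -> X) (o : X) (g : G) : Prop :=
  exists l, 0 < l /\
    is_lim_seq (fun n => d (act (gpow mul one g n) o) o / INR n) (Finite l).

Definition gplus (d : X -> X -> R) (mul : G -> G -> G) (one : G)
  (act : G -> X -> X) (o : X) (g : G) : (nat -> X) -> Prop :=
  bd_class d o (fun n => act (gpow mul one g n) o).

Definition act_bd (inv : G -> G) (act : G -> X -> X) (g : G)
  (xi : (nat -> X) -> Prop) : (nat -> X) -> Prop :=
  fun v => xi (fun n => act (inv g) (v n)).

Definition fixes_bd (inv : G -> G) (act : G -> X -> X) (g : G)
  (xi : (nat -> X) -> Prop) : Prop :=
  forall v, act_bd inv act g xi v <-> xi v.

Definition non_elementary (d : X -> X -> R) (mul : G -> G -> G) (one : G)
  (inv : G -> G) (act : G -> X -> X) (o : X) : Prop :=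
  exists g h, loxodromic d mul one act o g /\ loxodromic d mul one act o h /\
    ~ (exists xi, is_bd_point d o xi /\ fixes_bd inv act g xi /\
                  fixes_bd inv act h xi).

Definition VC (d : X -> X -> R) (o : X) (C : R) (xi : (nat -> X) -> Prop) (x : X) : Prop :=
  Rbar_le (Finite C) (gprod_bd d o x xi).

Definition count_le (d : X -> X -> R) (o : X) (C : R) (x : X)
  (f : G -> X) (S : list G) : nat :=
  length (filter (fun s => if Rle_dec (gprod d x (f s) o) C then true else false) S).

Definition schottky (d : X -> X -> R) (inv : G -> G) (act : G -> X -> X) (o : X)
  (eps C D : R) (S : list G) : Prop :=
  (forall x y,
     (1 - eps) * INR (length S) <= INR (count_le d o C x (fun s => act s y) S) /\
     (1 - eps) * INR (length S) <= INR (count_le d o C x (fun s => act (inv s) y) S)) /\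
  (forall s, In s S -> D <= d o (act s o)).

End Defs.

(* Main.v *)
Require Import Defs.
From Stdlib Require Import Reals List Lra Lia ZArith Classical FunctionalExtensionality.
From Coquelicot Require Import Coquelicot.
Import ListNotations.
Open Scope R_scope.

Inductive letter := La | LA | Lb | LB.
Definition linv (l : letter) := match l with La => LA | LA => La | Lb => LB | LB => Lb end.

Section Main.
Context {X G : Type} (d : X -> X -> R) (delta : R) (mul : G -> G -> G) (one : G)
  (inv : G -> G) (act : G -> X -> X) (o : X).
Hypothesis H_m : is_metric d.
Hypothesis H_h : hyperbolic d delta.
Hypothesis H_g : is_group mul one inv.
Hypothesis H_a : isometric_action d mul one act.

Local Notation gp := (gprod d).

Lemma d_nn x y : 0 <= d x y. Proof. apply H_m. Qed.
Lemma d_sym x y : d x y = d y x. Proof. apply H_m. Qed.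
Lemma d_tri x y z : d x z <= d x y + d y z. Proof. apply H_m. Qed.
Lemma d_refl x : d x x = 0. Proof. apply H_m; reflexivity. Qed.
Lemma delta_nn : 0 <= delta. Proof. apply H_h. Qed.

Lemma gp_sym x y z : gp x y z = gp y x z.
Proof. unfold gprod. rewrite (d_sym x y). lra. Qed.
Lemma gp_nn x y z : 0 <= gp x y z.
Proof. unfold gprod. pose proof (d_tri x z y). rewrite (d_sym z y) in H. lra. Qed.
Lemma gp_le x y z : gp x y z <= d x z.
Proof. unfold gprod. pose proof (d_tri y x z). rewrite (d_sym y x) in H. lra. Qed.
Lemma gp_le' x y z : gp x y z <= d y z.
Proof. rewrite gp_sym. apply gp_le. Qed.
Lemma gp_dual x y w : gp x y w + gp x w y = d y w.
Proof. unfold gprod. rewrite (d_sym w y). lra. Qed.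
Lemma gp_base x y w z : gp x y w <= gp x y z + d w z.
Proof. unfold gprod. pose proof (d_tri x z w). pose proof (d_tri y z w).
  rewrite (d_sym z w) in *. lra. Qed.
Lemma gp_lip x x' y w : gp x y w <= gp x' y w + d x x'.
Proof. unfold gprod. pose proof (d_tri x x' w). pose proof (d_tri x' x y).
  rewrite (d_sym x' x) in *. lra. Qed.
Lemma gp_self x w : gp x x w = d x w.
Proof. unfold gprod. rewrite d_refl. lra. Qed.
Lemma four x y z w M : M <= gp x y w -> M <= gp y z w -> M - delta <= gp x z w.
Proof. intros H1 H2. destruct H_h as [_ H]. specialize (H x y z w).
  unfold Rmin in H. destruct (Rle_dec _ _); lra. Qed.

Lemma gp_isoF (F : X -> X) : (forall x y, d (F x) (F y) = d x y) ->
  forall x y z, gp (F x) (F y) (F z) = gp x y z.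
Proof. intros HF x y z. unfold gprod. rewrite !HF. reflexivity. Qed.

Lemma act_iso g x y : d (act g x) (act g y) = d x y.
Proof. apply H_a. Qed.
Lemma act_mul g h x : act (mul g h) x = act g (act h x).
Proof. apply H_a. Qed.
Lemma act_one x : act one x = x.
Proof. apply H_a. Qed.
Lemma act_inv_l g x : act (inv g) (act g x) = x.
Proof. rewrite <- act_mul. destruct H_g as (_&_&_&H&_). rewrite H. apply act_one. Qed.
Lemma act_inv_r g x : act g (act (inv g) x) = x.
Proof. rewrite <- act_mul. destruct H_g as (_&_&_&_&H). rewrite H. apply act_one. Qed.
Lemma gp_act g x y z : gp (act g x) (act g y) (act g z) = gp x y z.
Proof. apply gp_isoF. apply act_iso. Qed.

Definition it (g : G) (k : nat) (y : X) : X := Nat.iter k (act g) y.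
Lemma it_S g k y : it g (S k) y = act g (it g k y). Proof. reflexivity. Qed.
Lemma it_Sr g k y : it g (S k) y = it g k (act g y).
Proof. unfold it. apply Nat.iter_succ_r. Qed.
Lemma it_add g m k y : it g (m + k) y = it g m (it g k y).
Proof. unfold it. apply Nat.iter_add. Qed.
Lemma it_0 g y : it g 0 y = y. Proof. reflexivity. Qed.
Lemma it_iso g k x y : d (it g k x) (it g k y) = d x y.
Proof. induction k; simpl; auto. fold (it g k x) (it g k y). rewrite act_iso; auto. Qed.
Lemma it_cancel g k y : it g k (it (inv g) k y) = y.
Proof. induction k. reflexivity. rewrite (it_Sr g), (it_S (inv g)). rewrite act_inv_r. auto. Qed.
Lemma it_cancel' g k y : it (inv g) k (it g k y) = y.
Proof. induction k. reflexivity. rewrite (it_Sr (inv g)), (it_S g). rewrite act_inv_l. auto. Qed.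
Lemma act_gpow g p y : act (gpow mul one g p) y = it g p y.
Proof. induction p; simpl. apply act_one. rewrite act_mul. f_equal. auto. Qed.
Lemma it_gpow g p k y : it (gpow mul one g p) k y = it g (k * p) y.
Proof. induction k. reflexivity. rewrite it_S, act_gpow, IHk.
  replace (S k * p)%nat with (p + k * p)%nat by lia. rewrite it_add. reflexivity. Qed.
Lemma it_sub g k : d (it g k o) o <= INR k * d (act g o) o.
Proof. induction k. simpl. rewrite d_refl. lra.
  rewrite it_Sr. rewrite S_INR. pose proof (d_tri (it g k (act g o)) (it g k o) o).
  rewrite it_iso in H. lra. Qed.
Lemma it_disp g k z : Rabs (d (it g k z) z - d (it g k o) o) <= 2 * d z o.
Proof.
  assert (A1: d (it g k z) z <= d (it g k z) (it g k o) + d (it g k o) z) by apply d_tri.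
  assert (A2: d (it g k o) z <= d (it g k o) o + d o z) by apply d_tri.
  assert (A3: d (it g k o) o <= d (it g k o) (it g k z) + d (it g k z) o) by apply d_tri.
  assert (A4: d (it g k z) o <= d (it g k z) z + d z o) by apply d_tri.
  rewrite !it_iso in *. rewrite (d_sym o z) in *.
  apply Rabs_le. lra. Qed.


Lemma four_lt x y z w c : c < gp x y w -> c < gp y z w -> c - delta < gp x z w.
Proof. intros H1 H2. pose proof (four x y z w (Rmin (gp x y w) (gp y z w))
  (Rmin_l _ _) (Rmin_r _ _)). unfold Rmin in *. destruct (Rle_dec _ _); lra. Qed.



Lemma chain_C1 (x : nat -> X) n L c : 0 <= c -> 2 * c + 2 * delta < L ->
  (forall k, (k < n)%nat -> L <= d (x k) (x (S k))) ->
  (forall k, (1 <= k)%nat -> (k < n)%nat -> gp (x (k - 1)%nat) (x (S k)) (x k) <= c) ->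
  forall m, (1 <= m <= n)%nat -> gp (x 0%nat) (x m) (x (m - 1)%nat) <= c + delta.
Proof.
  intros Hc HL Hd Hl. pose proof delta_nn as Hdl. induction m; intros Hm'. lia.
  destruct m as [|m'].
  - simpl. unfold gprod. rewrite d_refl, (d_sym (x 1%nat) (x 0%nat)). lra.
  - assert (IH : gp (x 0%nat) (x (S m')) (x m') <= c + delta).
    { replace m' with (S m' - 1)%nat at 2 by lia. apply IHm. lia. }
    replace (S (S m') - 1)%nat with (S m') by lia.
    destruct (Rle_dec (gp (x 0%nat) (x (S (S m'))) (x (S m'))) (c + delta)) as [H|H]; auto.
    exfalso.
    pose proof (gp_dual (x 0%nat) (x m') (x (S m'))) as Hdu.
    rewrite (gp_sym (x 0%nat) (x (S m')) (x m')) in IH.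
    assert (Hd1 : L <= d (x m') (x (S m'))) by (apply Hd; lia).
    rewrite (d_sym (x m') (x (S m'))) in Hd1.
    assert (E : c + delta < gp (x m') (x 0%nat) (x (S m'))).
    { rewrite gp_sym. unfold gprod in *. rewrite (d_sym (x (S m')) (x 0%nat)) in *. lra. }
    pose proof (four_lt (x m') (x 0%nat) (x (S (S m'))) (x (S m')) (c + delta) E ltac:(lra)).
    assert (Hl1 := Hl (S m') ltac:(lia) ltac:(lia)).
    replace (S m' - 1)%nat with m' in Hl1 by lia. lra.
Qed.

Lemma gp_expand x0 y w : d x0 y = d x0 w + d y w - 2 * gp x0 y w.
Proof. unfold gprod. lra. Qed.

Lemma chain_C2 (x : nat -> X) n L c : 0 <= c -> 2 * c + 2 * delta < L ->
  (forall k, (k < n)%nat -> L <= d (x k) (x (S k))) ->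
  (forall k, (1 <= k)%nat -> (k < n)%nat -> gp (x (k - 1)%nat) (x (S k)) (x k) <= c) ->
  forall m, (m <= n)%nat -> INR m * (L - 2 * c - 2 * delta) <= d (x 0%nat) (x m).
Proof.
  intros Hc HL Hd Hl m. induction m; intros Hm'.
  - simpl. rewrite d_refl. lra.
  - pose proof (chain_C1 x n L c Hc HL Hd Hl (S m) ltac:(lia)) as H1.
    replace (S m - 1)%nat with m in H1 by lia.
    rewrite (gp_expand (x 0%nat) (x (S m)) (x m)). rewrite S_INR.
    assert (L <= d (x m) (x (S m))) by (apply Hd; lia). rewrite d_sym in H.
    specialize (IHm ltac:(lia)). lra.
Qed.

Lemma chain_C3 (x : nat -> X) n L c : 0 <= c -> 2 * c + 3 * delta < L ->
  (forall k, (k < n)%nat -> L <= d (x k) (x (S k))) ->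
  (forall k, (1 <= k)%nat -> (k < n)%nat -> gp (x (k - 1)%nat) (x (S k)) (x k) <= c) ->
  forall k, (0 < k < n)%nat -> gp (x 0%nat) (x n) (x k) <= c + 2 * delta.
Proof.
  intros Hc HL Hd Hl k Hk. pose proof delta_nn as Hdl.
  set (y := fun j => x (n - j)%nat).
  assert (Hyd : forall j, (j < n)%nat -> L <= d (y j) (y (S j))).
  { intros j Hj. unfold y. replace (n - j)%nat with (S (n - S j)) by lia.
    rewrite d_sym. apply Hd. lia. }
  assert (Hyl : forall j, (1 <= j)%nat -> (j < n)%nat -> gp (y (j - 1)%nat) (y (S j)) (y j) <= c).
  { intros j H1 H2. unfold y. rewrite gp_sym.
    replace (n - (j - 1))%nat with (S (n - j)) by lia.
    replace (n - S j)%nat with (n - j - 1)%nat by lia. apply Hl; lia. }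
  pose proof (chain_C1 y n L c Hc ltac:(lra) Hyd Hyl (n - k) ltac:(lia)) as R1.
  unfold y in R1. replace (n - 0)%nat with n in R1 by lia.
  replace (n - (n - k))%nat with k in R1 by lia.
  replace (n - (n - k - 1))%nat with (S k) in R1 by lia.
  pose proof (chain_C1 x n L c Hc ltac:(lra) Hd Hl (S k) ltac:(lia)) as R2.
  replace (S k - 1)%nat with k in R2 by lia.
  pose proof (gp_dual (x n) (x (S k)) (x k)) as Hdu.
  assert (L <= d (x k) (x (S k))) by (apply Hd; lia). rewrite d_sym in H.
  destruct (Rle_dec (gp (x 0%nat) (x n) (x k)) (c + 2 * delta)) as [H'|H']; auto.
  exfalso.
  pose proof (four_lt (x 0%nat) (x n) (x (S k)) (x k) (c + 2 * delta) ltac:(lra) ltac:(lra)).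
  lra.
Qed.

Lemma firstn_S_nth {A : Type} (w : list A) k d0 : (k < length w)%nat ->
  firstn (S k) w = firstn k w ++ [nth k w d0].
Proof. revert k. induction w; intros k Hk; simpl in *. lia.
  destruct k. reflexivity. simpl. f_equal. apply IHw. lia. Qed.

Lemma firstn_rep {A : Type} (al : A) t M r : (t <= M)%nat -> firstn t (repeat al M ++ r) = repeat al t.
Proof. revert M. induction t; intros M H. reflexivity. destruct M. lia. simpl. f_equal. apply IHt. lia. Qed.

Definition ev (a b : G) (l : letter) : G :=
  match l with La => a | LA => inv a | Lb => b | LB => inv b end.

Lemma ev_cancel a b l y : act (ev a b l) (act (ev a b (linv l)) y) = y.
Proof. destruct l; simpl; try apply act_inv_r; apply act_inv_l. Qed.

Definition walk a b (w : list letter) (y : X) : X := fold_right (fun l z => act (ev a b l) z) y w.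
Lemma walk_app a b w1 w2 y : walk a b (w1 ++ w2) y = walk a b w1 (walk a b w2 y).
Proof. unfold walk. apply fold_right_app. Qed.
Lemma walk_iso a b w x y : d (walk a b w x) (walk a b w y) = d x y.
Proof. induction w; simpl; auto. rewrite act_iso. auto. Qed.
Lemma walk_rep a b l m y : walk a b (repeat l m) y = it (ev a b l) m y.
Proof. induction m; simpl; auto. rewrite IHm. reflexivity. Qed.

Fixpoint redf (w : list letter) : Prop :=
  match w with [] => True
  | l :: w' => match w' with [] => True | l' :: _ => l' <> linv l end /\ redf w' end.

Lemma redf_nth w : redf w -> forall k, (S k < length w)%nat -> nth (S k) w La <> linv (nth k w La).
Proof. induction w; intros Hr k Hk; simpl in *. lia.
  destruct w as [|l' w']. simpl in Hk. lia. destruct Hr as [H1 H2].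
  destruct k. simpl. auto. apply (IHw H2 k). simpl in *. lia. Qed.

Definition headok (l : letter) (w : list letter) : Prop :=
  match w with [] => True | l' :: _ => l' <> linv l end.

Lemma redf_rep l m w : redf w -> headok l w -> redf (repeat l (S m) ++ w).
Proof. intros Hr Hhd. induction m; simpl.
  - split; auto.
  - split; auto. destruct l; discriminate. Qed.

Lemma headok_rep l l' m w : l' <> linv l -> headok l (repeat l' (S m) ++ w).
Proof. simpl. auto. Qed.

Definition wpt a b (F : X -> X) (w : list letter) (k : nat) : X := F (walk a b (firstn k w) o).

Lemma word_chain a b (F : X -> X) w L c :
  (forall x y, d (F x) (F y) = d x y) ->
  (forall u v, u <> v -> gp (act (ev a b u) o) (act (ev a b v) o) o <= c) ->
  (forall l, L <= d o (act (ev a b l) o)) ->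
  redf w ->
  (forall k, (k < length w)%nat -> L <= d (wpt a b F w k) (wpt a b F w (S k))) /\
  (forall k, (1 <= k)%nat -> (k < length w)%nat ->
     gp (wpt a b F w (k - 1)%nat) (wpt a b F w (S k)) (wpt a b F w k) <= c).
Proof.
  intros HF Hpb HL Hr. split.
  - intros k Hk. unfold wpt. rewrite (firstn_S_nth w k La Hk). rewrite HF, walk_app.
    simpl. rewrite walk_iso. auto.
  - intros k H1 H2. destruct k as [|k']. lia. replace (S k' - 1)%nat with k' by lia.
    set (W := fun z => F (walk a b (firstn (S k') w) z)).
    assert (HW : forall x y, d (W x) (W y) = d x y). { intros. unfold W. rewrite HF. apply walk_iso. }
    assert (E0 : wpt a b F w k' = W (act (ev a b (linv (nth k' w La))) o)).
    { unfold W, wpt. rewrite (firstn_S_nth w k' La) by lia. rewrite walk_app. simpl.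
      rewrite ev_cancel. reflexivity. }
    assert (E1 : wpt a b F w (S k') = W o). { reflexivity. }
    assert (E2 : wpt a b F w (S (S k')) = W (act (ev a b (nth (S k') w La)) o)).
    { unfold W, wpt. rewrite (firstn_S_nth w (S k') La) by lia. rewrite walk_app. reflexivity. }
    rewrite E0, E1, E2, (gp_isoF W HW). apply Hpb.
    intro E. apply (redf_nth w Hr k' H2). rewrite <- E. destruct (nth k' w La); reflexivity.
Qed.

Lemma it_ev_cancel a b l M y : it (ev a b l) M (it (ev a b (linv l)) M y) = y.
Proof. induction M. reflexivity. rewrite (it_Sr (ev a b l)), (it_S (ev a b (linv l))).
  rewrite ev_cancel. auto. Qed.

Lemma linv_linv l : linv (linv l) = l. Proof. destruct l; reflexivity. Qed.

Section AB.
Variables (a b : G) (L c : R).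
Hypothesis Hc : 0 <= c.
Hypothesis HLc : 2 * c + 3 * delta < L.
Hypothesis Hpb : forall u v, u <> v -> gp (act (ev a b u) o) (act (ev a b v) o) o <= c.
Hypothesis HL : forall l, L <= d o (act (ev a b l) o).
Variable al : letter.
Hypothesis Hal : al = La \/ al = LA.

Definition Xp (i M : nat) : X := it b i (it (ev a b al) M (it (inv b) i o)).

Lemma chain_apply F w : (forall x y, d (F x) (F y) = d x y) -> redf w ->
  (forall k, (0 < k < length w)%nat ->
     gp (wpt a b F w 0) (wpt a b F w (length w)) (wpt a b F w k) <= c + 2 * delta) /\
  (forall m, (m <= length w)%nat -> INR m * (L - 2 * c - 2 * delta) <= d (wpt a b F w 0) (wpt a b F w m)).
Proof.
  intros HF Hr. destruct (word_chain a b F w L c HF Hpb HL Hr) as [H1 H2].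
  pose proof delta_nn. split.
  - apply (chain_C3 _ _ L c); auto.
  - apply (chain_C2 _ _ L c); auto. lra.
Qed.

Lemma prefix_bound i M t : (1 <= i)%nat -> (1 <= t <= M)%nat ->
  gp (Xp i M) o (it b i (it (ev a b al) t o)) <= c + 2 * delta /\
  INR (i + t) * (L - 2 * c - 2 * delta) <= d o (it b i (it (ev a b al) t o)) /\
  INR (i + M + i) * (L - 2 * c - 2 * delta) <= d o (Xp i M).
Proof.
  intros Hi Ht.
  set (w := repeat Lb i ++ repeat al M ++ repeat LB i).
  assert (Hr : redf w).
  { unfold w. destruct i as [|i']. lia. destruct M as [|M']. lia.
    destruct Hal; subst al;
    (apply redf_rep; [apply redf_rep;
      [rewrite <- (app_nil_r (repeat LB (S i'))); apply redf_rep; simpl; auto | ] | ];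
      simpl; try discriminate; auto). }
  assert (Hlen : length w = (i + M + i)%nat).
  { unfold w. rewrite !length_app, !repeat_length. lia. }
  destruct (chain_apply (fun z => z) w (fun x y => eq_refl) Hr) as [C3 C2].
  assert (E0 : wpt a b (fun z => z) w 0 = o) by reflexivity.
  assert (En : wpt a b (fun z => z) w (length w) = Xp i M).
  { unfold wpt. rewrite firstn_all. unfold w. rewrite !walk_app, !walk_rep. reflexivity. }
  assert (Ek : wpt a b (fun z => z) w (i + t) = it b i (it (ev a b al) t o)).
  { unfold wpt, w. replace (i + t)%nat with (length (repeat Lb i) + t)%nat by (rewrite repeat_length; lia).
    rewrite firstn_app_2. rewrite firstn_rep by lia. rewrite walk_app, !walk_rep. reflexivity. }
  split; [|split].
  - specialize (C3 (i + t)%nat ltac:(lia)). rewrite E0, En, Ek in C3. rewrite gp_sym. exact C3.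
  - specialize (C2 (i + t)%nat ltac:(lia)). rewrite E0, Ek in C2. exact C2.
  - specialize (C2 (length w) ltac:(lia)). rewrite E0, En, Hlen in C2. exact C2.
Qed.

Lemma pair_bound i j M M' : (1 <= i)%nat -> (i < j)%nat -> (1 <= M)%nat -> (1 <= M')%nat ->
  gp (Xp i M) (Xp j M') o <= INR i * d (act b o) o + c + 2 * delta.
Proof.
  intros Hi Hij HM HM'.
  set (F := fun z => it (ev a b al) M (it (inv b) i z)).
  assert (HF : forall x y, d (F x) (F y) = d x y). { intros. unfold F. rewrite !it_iso. reflexivity. }
  set (w := repeat Lb i ++ repeat (linv al) M ++ repeat Lb (j - i) ++ repeat al M' ++ repeat LB j).
  assert (Hr : redf w).
  { unfold w. destruct i as [|i']. lia. destruct M as [|M0]. lia. destruct M' as [|M0']. lia.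
    destruct (j - S i')%nat as [|k] eqn:Ek. lia. destruct j as [|j']. lia.
    destruct Hal; subst al; simpl linv;
    (apply redf_rep; [apply redf_rep; [apply redf_rep; [apply redf_rep;
      [rewrite <- (app_nil_r (repeat LB (S j'))); apply redf_rep; simpl; auto | ] | ] | ] | ];
      simpl; try discriminate; auto). }
  assert (Hlen : length w = (i + M + ((j - i) + M' + j))%nat).
  { unfold w. rewrite !length_app, !repeat_length. lia. }
  destruct (chain_apply F w HF Hr) as [C3 _].
  assert (E0 : wpt a b F w 0 = it (ev a b al) M (it (inv b) i o)) by reflexivity.
  assert (En : wpt a b F w (length w) = it b (j - i) (it (ev a b al) M' (it (inv b) j o))).
  { unfold wpt. rewrite firstn_all. unfold w, F. rewrite !walk_app, !walk_rep.
    rewrite it_cancel'. rewrite it_ev_cancel. reflexivity. }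
  assert (Ek : wpt a b F w (i + M) = o).
  { unfold wpt, w. replace (i + M)%nat with (length (repeat Lb i) + M)%nat by (rewrite repeat_length; lia).
    rewrite firstn_app_2. rewrite firstn_rep by lia. rewrite walk_app, !walk_rep.
    unfold F. rewrite it_cancel'. rewrite it_ev_cancel. reflexivity. }
  specialize (C3 (i + M)%nat ltac:(lia)). rewrite E0, En, Ek in C3.
  rewrite <- (gp_isoF (it b i) (it_iso b i)) in C3.
  rewrite <- it_add in C3. replace (i + (j - i))%nat with j in C3 by lia.
  fold (Xp i M) in C3. fold (Xp j M') in C3.
  pose proof (gp_base (Xp i M) (Xp j M') o (it b i o)).
  pose proof (it_sub b i). rewrite (d_sym o) in H. lra.
Qed.

End AB.

Lemma nat_big (r : R) : exists N : nat, r < INR N.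
Proof. destruct (archimed r) as [H1 _]. exists (Z.to_nat (Z.abs (up r))).
  rewrite INR_IZR_INZ. rewrite Z2Nat.id by apply Z.abs_nonneg.
  assert (H : (up r <= Z.abs (up r))%Z) by (destruct (Z.abs_spec (up r)) as [[? E]|[? E]]; lia).
  apply IZR_le in H. lra. Qed.

Lemma div_helper x y a b : 0 < a -> 0 < b -> x <= a * y -> x / (a * b) <= y / b.
Proof. intros Ha' Hb Hx. unfold Rdiv. rewrite Rinv_mult.
  rewrite <- Rmult_assoc. apply Rmult_le_compat_r. left; apply Rinv_0_lt_compat; lra.
  apply (Rmult_le_reg_l a); auto. replace (a * (x * / a)) with x by (field; lra). lra. Qed.

Lemma lox_it g : loxodromic d mul one act o g ->
  exists l, 0 < l /\ is_lim_seq (fun n => d (it g n o) o / INR n) l.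
Proof. intros [l [Hl Hlim]]. exists l. split; auto. eapply is_lim_seq_ext; [|exact Hlim].
  intros n. simpl. rewrite act_gpow. reflexivity. Qed.

Lemma lox_inf g (l : R) : is_lim_seq (fun n => d (it g n o) o / INR n) l ->
  forall k, (1 <= k)%nat -> l * INR k <= d (it g k o) o.
Proof.
  intros Hlim k Hk.
  assert (Hf : filterlim (fun m => (m * k)%nat) eventually eventually).
  { intros P [N HN]. exists N. intros m Hm. apply HN. nia. }
  pose proof (is_lim_seq_subseq _ _ _ Hf Hlim) as Hs. simpl in Hs.
  assert (Hk' : 0 < INR k) by (apply lt_0_INR; lia).
  assert (Hle : Rbar_le l (d (it g k o) o / INR k)).
  { apply (is_lim_seq_le_loc _ _ _ _) with (2 := Hs) (3 := is_lim_seq_const _).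
    exists 1%nat. intros m Hm1. rewrite mult_INR. apply div_helper; auto. apply lt_0_INR; lia.
    rewrite <- it_gpow. pose proof (it_sub (gpow mul one g k) m) as Hs2.
    rewrite act_gpow in Hs2. exact Hs2. }
  simpl in Hle. apply (Rmult_le_reg_r (/ INR k)). apply Rinv_0_lt_compat; auto.
  replace (l * INR k * / INR k) with l by (field; lra). exact Hle.
Qed.

Lemma lox_upper g (l : R) : is_lim_seq (fun n => d (it g n o) o / INR n) l ->
  forall eta, 0 < eta -> exists N, forall n, (N <= n)%nat -> d (it g n o) o <= (l + eta) * INR n.
Proof.
  intros Hlim eta He. apply is_lim_seq_spec in Hlim. destruct (Hlim (mkposreal eta He)) as [N HN].
  exists (S N). intros n Hn. specialize (HN n ltac:(lia)). simpl in HN.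
  assert (Hn' : 0 < INR n) by (apply lt_0_INR; lia).
  apply Rabs_def2 in HN. destruct HN as [HN _].
  assert (d (it g n o) o / INR n * INR n <= (l + eta) * INR n).
  { apply Rmult_le_compat_r; lra. }
  replace (d (it g n o) o / INR n * INR n) with (d (it g n o) o) in H by (field; lra). exact H.
Qed.

Lemma gpow_inv_act g p y : act (inv (gpow mul one g p)) y = it (inv g) p y.
Proof. rewrite <- (it_cancel g p y) at 1. rewrite <- act_gpow. apply act_inv_l. Qed.

Lemma d_inv_orbit g p : d (it (inv g) p o) o = d (it g p o) o.
Proof. rewrite <- (it_iso g p). rewrite it_cancel. apply d_sym. Qed.

Lemma lox_self g (l : R) : 0 < l -> is_lim_seq (fun n => d (it g n o) o / INR n) l ->
  forall eta, 0 < eta -> exists P, forall p, (P <= p)%nat ->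
    gp (it (inv g) p o) (it g p o) o <= eta * INR p.
Proof.
  intros Hl Hlim eta He. destruct (lox_upper g l Hlim eta He) as [N HN].
  exists (S N). intros p Hp. specialize (HN p ltac:(lia)).
  pose proof (lox_inf g l Hlim (p + p) ltac:(lia)) as H2.
  unfold gprod. rewrite d_inv_orbit.
  assert (E : d (it (inv g) p o) (it g p o) = d (it g (p + p) o) o).
  { rewrite <- (it_iso g p). rewrite it_cancel, <- it_add. apply d_sym. }
  rewrite E. rewrite plus_INR in H2. lra.
Qed.

Lemma inv_lox g : loxodromic d mul one act o g -> loxodromic d mul one act o (inv g).
Proof. intros [l [Hl Hlim]]. exists l. split; auto. eapply is_lim_seq_ext; [|exact Hlim].
  intros n. simpl. rewrite !act_gpow. rewrite d_inv_orbit. reflexivity. Qed.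

Lemma orbit_lower g : loxodromic d mul one act o g ->
  exists kap K, 0 < kap /\ forall n m, (n <= m)%nat -> kap * INR n - K <= gp (it g n o) (it g m o) o.
Proof.
  intros Hg. destruct (lox_it g Hg) as [l [Hl Hlim]].
  destruct (lox_self g l Hl Hlim (l / 8) ltac:(lra)) as [P HP].
  destruct (nat_big (4 * delta / l)) as [N0 HN0].
  pose proof delta_nn as Hdl.
  set (p := Nat.max (S P) (S N0)).
  assert (Hp1 : (1 <= p)%nat) by lia.
  assert (HpP : (P <= p)%nat) by lia.
  assert (Hp0 : 0 < INR p) by (apply lt_0_INR; lia).
  assert (HpN : 4 * delta < l * INR p).
  { assert (INR N0 <= INR p) by (apply le_INR; lia).
    assert (4 * delta / l < INR p) by lra.
    apply (Rmult_lt_compat_l l) in H0; auto. replace (l * (4 * delta / l)) with (4 * delta) in H0 by (field; lra). lra. }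
  set (A := gpow mul one g p).
  set (x := fun k => it A k o).
  set (L0 := l * INR p). set (c0 := l * INR p / 8).
  assert (Hc0 : 0 <= c0) by (unfold c0; apply Rmult_le_pos; [|lra]; apply Rmult_le_pos; lra).
  assert (HLc : 2 * c0 + 3 * delta < L0) by (unfold c0, L0; lra).
  assert (HAo : act A o = it g p o) by (apply act_gpow).
  assert (Hd : forall k, L0 <= d (x k) (x (S k))).
  { intros k. unfold x. rewrite it_Sr, it_iso, HAo, d_sym. apply lox_inf; auto. }
  assert (Hloc : forall k, (1 <= k)%nat -> gp (x (k - 1)%nat) (x (S k)) (x k) <= c0).
  { intros k Hk. destruct k as [|k']. lia. replace (S k' - 1)%nat with k' by lia. unfold x.
    repeat rewrite (it_Sr A). rewrite (gp_isoF (it A k') (it_iso A k')).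
    assert (E : gp (act (inv A) o) (act A o) o = gp o (act A (act A o)) (act A o))
      by (rewrite <- (gp_act A), act_inv_r; reflexivity). rewrite <- E.
    unfold A; rewrite gpow_inv_act, act_gpow. unfold c0. specialize (HP p HpP). lra. }
  set (b0 := L0 - 2 * c0 - 2 * delta).
  assert (Hb0 : 0 < b0) by (unfold b0, c0, L0; lra).
  assert (Hx0 : x 0%nat = o) by reflexivity.
  assert (Q : forall q q', (q <= q')%nat -> INR q * b0 - c0 - 2 * delta <= gp (x q) (x q') o).
  { intros q q' Hq.
    assert (C2 := chain_C2 x q' L0 c0 Hc0 ltac:(lra) (fun k _ => Hd k)
                  (fun k H1 _ => Hloc k H1) q Hq).
    rewrite Hx0 in C2. fold b0 in C2.
    destruct q as [|q0].
    - pose proof (gp_nn (x 0%nat) (x q') o). replace (INR 0) with 0 by reflexivity. lra.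
    - destruct (Nat.eq_dec (S q0) q') as [E|E].
      + rewrite <- E. rewrite gp_self. rewrite d_sym. lra.
      + assert (C3 := chain_C3 x q' L0 c0 Hc0 HLc (fun k _ => Hd k)
                  (fun k H1 _ => Hloc k H1) (S q0) ltac:(lia)).
        rewrite Hx0 in C3. pose proof (gp_dual (x q') (x (S q0)) o) as Hdu.
        rewrite (gp_sym (x q') o) in Hdu. rewrite (gp_sym (x q') (x (S q0))) in Hdu.
        rewrite (d_sym (x (S q0)) o) in Hdu. lra. }
  set (D1 := d (act g o) o).
  assert (HD1 : 0 <= D1) by apply d_nn.
  assert (Near : forall n, d (it g n o) (x (n / p)%nat) <= INR p * D1 /\
                    INR n < INR p * (INR (n / p) + 1)).
  { intros n. pose proof (Nat.div_mod_eq n p) as E. pose proof (Nat.mod_upper_bound n p ltac:(lia)) as Hr.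
    set (q := (n / p)%nat) in *. set (r := (n mod p)%nat) in *.
    split.
    - unfold x, A. rewrite it_gpow. replace n with (q * p + r)%nat at 1 by lia. rewrite it_add, it_iso.
      pose proof (it_sub g r). assert (INR r <= INR p) by (apply le_INR; lia).
      assert (INR r * D1 <= INR p * D1) by (apply Rmult_le_compat_r; auto). fold D1 in H. lra.
    - rewrite E. rewrite plus_INR, mult_INR. assert (INR r < INR p) by (apply lt_INR; lia). lra. }
  exists (b0 / INR p), (b0 + c0 + 2 * delta + 2 * (INR p * D1)). split.
  { apply Rdiv_lt_0_compat; auto. }
  intros n m Hnm.
  destruct (Near n) as [Nn1 Nn2]. destruct (Near m) as [Nm1 _].
  pose proof (Q (n / p)%nat (m / p)%nat (Nat.Div0.div_le_mono n m p Hnm)) as Qn.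
  pose proof (gp_lip (x (n / p)%nat) (it g n o) (x (m / p)%nat) o).
  pose proof (gp_lip (x (m / p)%nat) (it g m o) (it g n o) o).
  rewrite (gp_sym (x (m / p)%nat) (it g n o)) in H0.
  rewrite (d_sym (x (n / p)%nat)) in H. rewrite (d_sym (x (m / p)%nat)) in H0.
  rewrite (gp_sym (it g m o)) in H0.
  assert (b0 / INR p * INR n <= b0 * (INR (n / p) + 1)).
  { unfold Rdiv. rewrite Rmult_assoc. apply Rmult_le_compat_l. lra.
    apply (Rmult_le_reg_l (INR p)); auto. replace (INR p * (/ INR p * INR n)) with (INR n) by (field; lra). lra. }
  lra.
Qed.

Lemma orbit_conv g : loxodromic d mul one act o g ->
  forall M, exists N, forall n m, (N <= n)%nat -> (N <= m)%nat -> M <= gp (it g n o) (it g m o) o.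
Proof.
  intros Hg M. destruct (orbit_lower g Hg) as [kap [K [Hk HK]]].
  destruct (nat_big ((M + K) / kap)) as [N HN]. exists N. intros n m Hn Hm.
  assert (Hn' : (M + K) / kap <= INR n) by (pose proof (le_INR _ _ Hn); lra).
  assert (Hm' : (M + K) / kap <= INR m) by (pose proof (le_INR _ _ Hm); lra).
  assert (F : forall t, (M + K) / kap <= INR t -> M <= kap * INR t - K).
  { intros t Ht. apply (Rmult_le_compat_l kap) in Ht; [|lra].
    replace (kap * ((M + K) / kap)) with (M + K) in Ht by (field; lra). lra. }
  destruct (Nat.le_ge_cases n m) as [H|H].
  - specialize (HK n m H). specialize (F n Hn'). lra.
  - specialize (HK m n H). specialize (F m Hm'). rewrite gp_sym. lra.
Qed.

Lemma se_sym u v : seq_equiv d o u v -> seq_equiv d o v u.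
Proof. intros H M. destruct (H M) as [N HN]. exists N. intros n m Hn Hm. rewrite gp_sym. auto. Qed.

Lemma se_trans a b c0 : seq_equiv d o a b -> seq_equiv d o b c0 -> seq_equiv d o a c0.
Proof. intros H1 H2 M. destruct (H1 (M + delta)) as [N1 HN1]. destruct (H2 (M + delta)) as [N2 HN2].
  exists (Nat.max N1 N2). intros n m Hn Hm.
  assert (Hn1 : (N1 <= n)%nat) by lia. assert (Hm2 : (N2 <= m)%nat) by lia.
  assert (HN1' : (N1 <= Nat.max N1 N2)%nat) by lia. assert (HN2' : (N2 <= Nat.max N1 N2)%nat) by lia.
  pose proof (four (a n) (b (Nat.max N1 N2)) (c0 m) o (M + delta)
    (HN1 n _ Hn1 HN1') (HN2 _ m HN2' Hm2)). lra. Qed.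

Lemma gp_move k x y : gp x y o - d o (act (inv k) o) <= gp (act k x) (act k y) o.
Proof. rewrite <- (gp_act (inv k) (act k x)), !act_inv_l.
  pose proof (gp_base x y o (act (inv k) o)). lra. Qed.

Lemma se_act k a b a' b' : seq_equiv d o a b -> (forall n, a' n = act k (a n)) ->
  (forall n, b' n = act k (b n)) -> seq_equiv d o a' b'.
Proof. intros H Ea Eb M. destruct (H (M + d o (act (inv k) o))) as [N HN]. exists N.
  intros n m Hn Hm. rewrite Ea, Eb. pose proof (gp_move k (a n) (b m)). specialize (HN n m Hn Hm). lra. Qed.

Lemma conv_act k a a' : conv_inf d o a -> (forall n, a' n = act k (a n)) -> conv_inf d o a'.
Proof. intros H Ea M. destruct (H (M + d o (act (inv k) o))) as [N HN]. exists N.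
  intros n m Hn Hm. rewrite !Ea. pose proof (gp_move k (a n) (a m)). specialize (HN n m Hn Hm). lra. Qed.

Lemma fix_lemma k w : conv_inf d o w -> seq_equiv d o w (fun n => act k (w n)) ->
  fixes_bd inv act k (bd_class d o w).
Proof.
  intros Hc Hs v. unfold act_bd, bd_class. split.
  - intros [H1 H2]. split.
    + apply (conv_act k _ _ H1). intros n. rewrite act_inv_r. reflexivity.
    + apply (se_trans _ _ _ Hs). apply (se_act k _ _ _ _ H2); auto. intros n. rewrite act_inv_r. reflexivity.
  - intros [H1 H2]. split.
    + apply (conv_act (inv k) _ _ H1). reflexivity.
    + apply (se_act (inv k) (fun n => act k (w n)) v); auto.
      * apply (se_trans _ _ _ (se_sym _ _ Hs) H2).
      * intros n. rewrite act_inv_l. reflexivity.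
Qed.

Lemma class_ext u1 u2 : seq_equiv d o u1 u2 -> forall v, bd_class d o u1 v <-> bd_class d o u2 v.
Proof. intros H v. unfold bd_class. split; intros [H1 H2]; split; auto.
  - apply (se_trans _ _ _ (se_sym _ _ H) H2).
  - apply (se_trans _ _ _ H H2). Qed.

Lemma fixes_ext k (xi xi' : (nat -> X) -> Prop) : (forall v, xi v <-> xi' v) ->
  fixes_bd inv act k xi -> fixes_bd inv act k xi'.
Proof. intros E H v. unfold act_bd in *. rewrite <- !E. apply H. Qed.

Lemma act_inv_inv k y : act (inv (inv k)) y = act k y.
Proof. rewrite <- (act_inv_l k y) at 1. apply act_inv_l. Qed.

Lemma fixes_inv k xi : fixes_bd inv act k xi -> fixes_bd inv act (inv k) xi.
Proof. intros H v. unfold act_bd in *.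
  assert (E : (fun n => act (inv (inv k)) (v n)) = (fun n => act k (v n))).
  { apply functional_extensionality. intros n. apply act_inv_inv. }
  rewrite E. specialize (H (fun n => act k (v n))). unfold act_bd in H; cbv beta in H.
  assert (E2 : (fun n => act (inv k) (act k (v n))) = v).
  { apply functional_extensionality. intros n. apply act_inv_l. }
  rewrite E2 in H. tauto. Qed.

Lemma orbit_se u : loxodromic d mul one act o u ->
  conv_inf d o (fun n => it u n o) /\ seq_equiv d o (fun n => it u n o) (fun n => act u (it u n o)).
Proof. intros Hu. split.
  - intros M. destruct (orbit_conv u Hu M) as [N HN]. exists N. auto.
  - intros M. destruct (orbit_conv u Hu M) as [N HN]. exists N. intros n m Hn Hm.
    change (act u (it u m o)) with (it u (S m) o). apply HN; lia. Qed.

Lemma cross_bound u v : loxodromic d mul one act o u -> loxodromic d mul one act o v ->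
  ~ (exists xi, is_bd_point d o xi /\ fixes_bd inv act u xi /\ fixes_bd inv act v xi) ->
  exists c, forall k k', gp (it u k o) (it v k' o) o <= c.
Proof.
  intros Hu Hv Hn. apply NNPP. intros Hc. apply Hn.
  assert (Hc' : forall c, exists k k', c < gp (it u k o) (it v k' o) o).
  { intros c. apply NNPP. intros H. apply Hc. exists c. intros k k'.
    apply Rnot_lt_le. intros H'. apply H. exists k, k'. exact H'. }
  destruct (orbit_se u Hu) as [Cu Su]. destruct (orbit_se v Hv) as [Cv Sv].
  assert (Huv : seq_equiv d o (fun n => it u n o) (fun n => it v n o)).
  { intros M. pose proof delta_nn.
    destruct (orbit_conv u Hu (M + 2 * delta)) as [N1 HN1].
    destruct (orbit_conv v Hv (M + 2 * delta)) as [N2 HN2].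
    set (d1 := d (act u o) o). set (d2 := d (act v o) o).
    assert (0 <= d1) by apply d_nn. assert (0 <= d2) by apply d_nn.
    destruct (Hc' (INR N1 * d1 + INR N2 * d2 + Rabs (M + 2 * delta))) as [k [k' Hk]].
    assert (A1 : 0 <= INR N1 * d1) by (apply Rmult_le_pos; auto; apply pos_INR).
    assert (A2 : 0 <= INR N2 * d2) by (apply Rmult_le_pos; auto; apply pos_INR).
    assert (A3 : M + 2 * delta <= Rabs (M + 2 * delta)) by apply Rle_abs.
    assert (A4 : 0 <= Rabs (M + 2 * delta)) by apply Rabs_pos.
    assert (Kk : (N1 <= k)%nat).
    { destruct (Nat.le_gt_cases N1 k) as [H'|H']; auto. exfalso.
      pose proof (gp_le (it u k o) (it v k' o) o) as P1. pose proof (it_sub u k) as P2.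
      assert (P3 : INR k * d1 <= INR N1 * d1) by (apply Rmult_le_compat_r; auto; apply le_INR; lia).
      fold d1 in P2. lra. }
    assert (Kk' : (N2 <= k')%nat).
    { destruct (Nat.le_gt_cases N2 k') as [H'|H']; auto. exfalso.
      pose proof (gp_le' (it u k o) (it v k' o) o) as P1. pose proof (it_sub v k') as P2.
      assert (P3 : INR k' * d2 <= INR N2 * d2) by (apply Rmult_le_compat_r; auto; apply le_INR; lia).
      fold d2 in P2. lra. }
    exists (Nat.max N1 N2). intros n m Hn1 Hm1.
    pose proof (four (it u n o) (it u k o) (it v k' o) o (M + 2 * delta) (HN1 n k ltac:(lia) Kk) ltac:(lra)).
    pose proof (HN2 k' m Kk' ltac:(lia)).
    pose proof (four (it u n o) (it v k' o) (it v m o) o (M + delta) ltac:(lra) ltac:(lra)). lra. }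
  exists (bd_class d o (fun n => it u n o)). split; [|split].
  - exists (fun n => it u n o). split; auto. tauto.
  - apply fix_lemma; auto.
  - apply (fixes_ext v (bd_class d o (fun n => it v n o))).
    + intros w. symmetry. apply class_ext. auto.
    + apply fix_lemma; auto.
Qed.

Lemma prefix_lower a b L c al i M M' :
  0 <= c -> 2 * c + 3 * delta < L ->
  (forall u v, u <> v -> gp (act (ev a b u) o) (act (ev a b v) o) o <= c) ->
  (forall l, L <= d o (act (ev a b l) o)) -> (al = La \/ al = LA) ->
  (1 <= i)%nat -> (1 <= M)%nat -> (M <= M')%nat ->
  INR (i + M) * (L - 2 * c - 2 * delta) - c - 3 * delta <= gp (Xp a b al i M) (Xp a b al i M') o.
Proof.
  intros Hc HLc Hpb HL Hal Hi HM HMM.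
  destruct (prefix_bound a b L c Hc HLc Hpb HL al Hal i M M Hi ltac:(lia)) as [P1 [P2 _]].
  destruct (prefix_bound a b L c Hc HLc Hpb HL al Hal i M' M Hi ltac:(lia)) as [Q1 _].
  set (u := it b i (it (ev a b al) M o)) in *.
  pose proof (gp_dual (Xp a b al i M) u o) as D1. pose proof (gp_dual (Xp a b al i M') u o) as D2.
  rewrite d_sym in P2.
  pose proof (four (Xp a b al i M) u (Xp a b al i M') o (INR (i + M) * (L - 2 * c - 2 * delta) - c - 2 * delta)
    ltac:(lra) ltac:(rewrite gp_sym; lra)). lra.
Qed.

Lemma bad_split (T T' : X -> X) x y C A :
  (forall z w, d (T z) (T w) = d z w) -> (forall z, T (T' z) = z) ->
  C + A <= d (T o) o -> C < gp x (T y) o -> A <= gp y (T' o) o \/ C - delta < gp x (T o) o.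
Proof.
  intros HT HTT' HCA Hb.
  assert (E : gp (T y) (T o) o + gp y (T' o) o = d (T o) o).
  { assert (e1 : d (T y) o = d y (T' o)) by (rewrite <- (HT y (T' o)), HTT'; reflexivity).
    assert (e3 : d (T' o) o = d o (T o)) by (rewrite <- (HT (T' o) o), HTT'; reflexivity).
    unfold gprod. rewrite e1, e3, HT. rewrite (d_sym o (T o)). lra. }
  destruct (Rle_dec A (gp y (T' o) o)) as [H|H]; [left; auto|right].
  apply (four_lt x (T y) (T o) o C Hb). lra.
Qed.

Lemma count_two (sf : nat -> G) (P : G -> bool) N (i1 i2 : nat) :
  (forall i, (1 <= i <= N)%nat -> P (sf i) = false -> i = i1 \/ i = i2) ->
  INR N - 2 <= INR (length (filter P (map sf (seq 1 N)))).
Proof.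
  intros H.
  assert (E1 : forall l, length (filter P (map sf l)) = length (filter (fun i => P (sf i)) l)).
  { induction l; simpl; auto. destruct (P (sf a)); simpl; auto. }
  assert (E2 : forall (l : list nat) (Q : nat -> bool),
     length l = (length (filter Q l) + length (filter (fun i => negb (Q i)) l))%nat).
  { induction l; intros Q; simpl; auto. rewrite (IHl Q). destruct (Q a); simpl; lia. }
  rewrite E1. pose proof (E2 (seq 1 N) (fun i => P (sf i))) as E3. rewrite length_seq in E3.
  assert (Hb : (length (filter (fun i => negb (P (sf i))) (seq 1 N)) <= length [i1; i2])%nat).
  { apply NoDup_incl_length. apply NoDup_filter. apply seq_NoDup.
    intros i Hi. apply filter_In in Hi. destruct Hi as [Hi1 Hi2]. apply in_seq in Hi1.
    destruct (P (sf i)) eqn:Ep; simpl in Hi2; try discriminate.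
    destruct (H i ltac:(lia) Ep) as [->| ->]; simpl; auto. }
  simpl in Hb.
  assert (N <= length (filter (fun i => P (sf i)) (seq 1 N)) + 2)%nat by lia.
  apply le_INR in H0. rewrite plus_INR in H0. simpl in H0. lra.
Qed.

Lemma vc_near (w : nat -> X) C x : VC d o C (bd_class d o w) x ->
  exists N, forall k, (N <= k)%nat -> C - 1 / 2 - delta <= gp x (w k) o.
Proof.
  intros H. unfold VC, gprod_bd in H.
  set (E := fun r => exists u, bd_class d o w u /\ LimInf_seq (fun n => gp x (u n) o) = Finite r) in *.
  assert (Hr : exists r, E r /\ C - 1 / 4 < r).
  { apply NNPP. intros Hn. destruct (Lub_Rbar_correct E) as [_ Hl].
    assert (Hub : is_ub_Rbar E (C - 1 / 4)).
    { intros r Er. simpl. apply Rnot_lt_le. intros Hlt. apply Hn. exists r. auto. }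
    specialize (Hl _ Hub). pose proof (Rbar_le_trans _ _ _ H Hl). simpl in H0. lra. }
  destruct Hr as [r [[v [[Hcv Hse] Hli]] Hr]].
  destruct (ex_LimInf_seq (fun n => gp x (v n) o)) as [l Hl].
  rewrite (is_LimInf_seq_unique _ _ Hl) in Hli. subst l.
  destruct (Hl (mkposreal (1 / 4) ltac:(lra))) as [_ [N1 HN1]]. simpl in HN1.
  destruct (Hse C) as [N2 HN2].
  exists N2. intros k Hk.
  set (n := Nat.max N1 N2).
  pose proof (HN1 n ltac:(lia)). pose proof (HN2 k n Hk ltac:(lia)).
  rewrite gp_sym in H1.
  pose proof (four x (v n) (w k) o (C - 1 / 2) ltac:(lra) ltac:(lra)). lra.
Qed.

Lemma vc_from (w : nat -> X) C x : bd_class d o w w ->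
  (forall k, (1 <= k)%nat -> C <= gp x (w k) o) -> VC d o C (bd_class d o w) x.
Proof.
  intros Hw Hk. unfold VC, gprod_bd.
  set (f := fun n => gp x (w n) o).
  assert (L1 : Rbar_le (Finite C) (LimInf_seq f)).
  { rewrite <- (LimInf_seq_const C). apply LimInf_le. exists 1%nat. intros n Hn. apply Hk; auto. }
  assert (L2 : Rbar_le (LimInf_seq f) (Finite (d x o))).
  { rewrite <- (LimInf_seq_const (d x o)). apply LimInf_le. exists 0%nat. intros n _. apply gp_le. }
  destruct (LimInf_seq f) as [r| |] eqn:Ef; simpl in L1, L2; try contradiction.
  apply Rbar_le_trans with (Finite r); auto.
  destruct (Lub_Rbar_correct (fun r0 => exists u, bd_class d o w u /\
              LimInf_seq (fun n => gp x (u n) o) = Finite r0)) as [Hub _].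
  apply Hub. exists w. split; auto.
Qed.

Lemma lox_conj g (lg : R) z P : is_lim_seq (fun n => d (it g n o) o / INR n) lg -> (1 <= P)%nat ->
  is_lim_seq (fun k => d (it g (k * P) z) z / INR k) (INR P * lg).
Proof.
  intros Hlim HP.
  assert (Hf : filterlim (fun k => (k * P)%nat) eventually eventually).
  { intros Q [N HN]. exists N. intros k Hk. apply HN. nia. }
  pose proof (is_lim_seq_subseq _ _ _ Hf Hlim) as Hs. simpl in Hs.
  assert (HP' : 0 < INR P) by (apply lt_0_INR; lia).
  assert (Hu : is_lim_seq (fun k => d (it g (k * P) o) o / INR k) (INR P * lg)).
  { apply is_lim_seq_ext_loc with (u := fun k => INR P * (d (it g (k * P) o) o / INR (k * P))).
    - exists 1%nat. intros k Hk. assert (0 < INR k) by (apply lt_0_INR; lia).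
      rewrite mult_INR. field. lra.
    - apply (is_lim_seq_scal_l _ (INR P) lg) in Hs. exact Hs. }
  assert (He : is_lim_seq (fun k => 2 * d z o / INR k) 0).
  { pose proof (is_lim_seq_inv _ _ is_lim_seq_INR ltac:(discriminate)) as Hi. simpl in Hi.
    apply (is_lim_seq_scal_l _ (2 * d z o)) in Hi. simpl in Hi. rewrite Rmult_0_r in Hi.
    eapply is_lim_seq_ext; [|exact Hi]. intros k. simpl. unfold Rdiv. reflexivity. }
  apply is_lim_seq_le_le_loc with (u := fun k => d (it g (k * P) o) o / INR k - 2 * d z o / INR k)
    (w := fun k => d (it g (k * P) o) o / INR k + 2 * d z o / INR k).
  - exists 1%nat. intros k Hk. assert (0 < INR k) by (apply lt_0_INR; lia).
    pose proof (it_disp g (k * P) z) as Hd. apply Rabs_le_between' in Hd.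
    unfold Rdiv. split.
    + rewrite <- Rmult_minus_distr_r. apply Rmult_le_compat_r. left; apply Rinv_0_lt_compat; lra. lra.
    + rewrite <- Rmult_plus_distr_r. apply Rmult_le_compat_r. left; apply Rinv_0_lt_compat; lra. lra.
  - replace (INR P * lg) with (INR P * lg - 0) by ring. apply is_lim_seq_minus'; auto.
  - replace (INR P * lg) with (INR P * lg + 0) by ring. apply is_lim_seq_plus'; auto.
Qed.

Lemma conj_it s b e i n k y : (forall y, act s y = it b i (it e n (it (inv b) i y))) ->
  it s k y = it b i (it e (k * n) (it (inv b) i y)).
Proof.
  intros Hs. induction k.
  - simpl. symmetry. apply it_cancel.
  - rewrite it_S, IHk, Hs. rewrite it_cancel'. rewrite <- it_add. reflexivity.
Qed.

Lemma fixes_uninv u xi : fixes_bd inv act (inv u) xi -> fixes_bd inv act u xi.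
Proof. intros H v. pose proof (fixes_inv _ _ H v) as H1. unfold act_bd in *.
  assert (E : (fun n => act (inv (inv (inv u))) (v n)) = (fun n => act (inv u) (v n))).
  { apply functional_extensionality. intros n. apply act_inv_inv. }
  rewrite E in H1. exact H1. Qed.

Lemma main_result : non_elementary d mul one inv act o ->
  forall eps : R, 0 < eps < 1 ->
  exists C : R, forall D : R,
    exists S : list G,
      S <> nil /\ NoDup S /\
      (forall s, In s S -> loxodromic d mul one act o s) /\
      schottky d inv act o eps C D S /\
      (forall s t, In s S -> In t S -> s <> t ->
         forall x, ~ (VC d o C (gplus d mul one act o s) x /\
                      VC d o C (gplus d mul one act o t) x)) /\
      (forall s, In s S -> VC d o (C + delta) (gplus d mul one act o s) (act s o)).
Proof.
  intros [g [h [Lg [Lh NCF]]]] eps Heps.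
  pose proof delta_nn as Hdl.
  assert (NCF2 : ~ (exists xi, is_bd_point d o xi /\ fixes_bd inv act (inv g) xi /\ fixes_bd inv act h xi)).
  { intros [xi [H1 [H2 H3]]]. apply NCF. exists xi. split; auto. split; auto. apply fixes_uninv; auto. }
  assert (NCF3 : ~ (exists xi, is_bd_point d o xi /\ fixes_bd inv act g xi /\ fixes_bd inv act (inv h) xi)).
  { intros [xi [H1 [H2 H3]]]. apply NCF. exists xi. split; auto. split; auto. apply fixes_uninv; auto. }
  assert (NCF4 : ~ (exists xi, is_bd_point d o xi /\ fixes_bd inv act (inv g) xi /\ fixes_bd inv act (inv h) xi)).
  { intros [xi [H1 [H2 H3]]]. apply NCF. exists xi. split; auto. split; apply fixes_uninv; auto. }
  destruct (cross_bound g h Lg Lh NCF) as [c1 Hc1].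
  destruct (cross_bound (inv g) h (inv_lox g Lg) Lh NCF2) as [c2 Hc2].
  destruct (cross_bound g (inv h) Lg (inv_lox h Lh) NCF3) as [c3 Hc3].
  destruct (cross_bound (inv g) (inv h) (inv_lox g Lg) (inv_lox h Lh) NCF4) as [c4 Hc4].
  set (cx := Rmax (Rmax c1 c2) (Rmax c3 c4)).
  assert (Hcx : c1 <= cx /\ c2 <= cx /\ c3 <= cx /\ c4 <= cx).
  { unfold cx, Rmax. repeat destruct (Rle_dec _ _); lra. }
  destruct (lox_it g Lg) as [lg [Hlg Hlimg]].
  destruct (lox_it h Lh) as [lh [Hlh Hlimh]].
  set (lam := Rmin lg lh).
  assert (Hlam : 0 < lam) by (unfold lam; apply Rmin_glb_lt; auto).
  assert (Hlamg : lam <= lg) by apply Rmin_l. assert (Hlamh : lam <= lh) by apply Rmin_r.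
  destruct (lox_self g lg Hlg Hlimg (lam / 8) ltac:(lra)) as [Pg HPg].
  destruct (lox_self h lh Hlh Hlimh (lam / 8) ltac:(lra)) as [Ph HPh].
  destruct (nat_big ((2 * Rabs cx + 4 * delta) / lam)) as [M0 HM0].
  set (m := Nat.max (S Pg) (Nat.max (S Ph) (S M0))).
  assert (Hm1 : (1 <= m)%nat) by lia.
  assert (Hm0 : 0 < INR m) by (apply lt_0_INR; lia).
  assert (HmM : 2 * Rabs cx + 4 * delta < lam * INR m).
  { assert (INR M0 <= INR m) by (apply le_INR; lia).
    assert ((2 * Rabs cx + 4 * delta) / lam < INR m) by lra.
    apply (Rmult_lt_compat_l lam) in H0; auto.
    replace (lam * ((2 * Rabs cx + 4 * delta) / lam)) with (2 * Rabs cx + 4 * delta) in H0 by (field; lra). lra. }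
  set (a := gpow mul one g m). set (b := gpow mul one h m).
  set (L := lam * INR m) in *.
  set (c := Rmax cx (L / 8)).
  assert (HL0 : 0 < L) by (unfold L; apply Rmult_lt_0_compat; lra).
  assert (Hc : 0 <= c).
  { unfold c. eapply Rle_trans; [|apply Rmax_r]. lra. }
  assert (Hccx : cx <= c) by apply Rmax_l.
  assert (Hcm : L / 8 <= c) by apply Rmax_r.
  assert (HLc : 2 * c + 3 * delta < L).
  { unfold c. pose proof (Rle_abs cx). pose proof (Rabs_pos cx). unfold Rmax. destruct (Rle_dec _ _); lra. }
  assert (Sg : gp (it (inv g) m o) (it g m o) o <= c).
  { specialize (HPg m ltac:(lia)). assert (lam / 8 * INR m = L / 8) by (unfold L; field). lra. }
  assert (Sh : gp (it (inv h) m o) (it h m o) o <= c).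
  { specialize (HPh m ltac:(lia)). assert (lam / 8 * INR m = L / 8) by (unfold L; field). lra. }
  specialize (Hc1 m m). specialize (Hc2 m m). specialize (Hc3 m m). specialize (Hc4 m m).
  assert (Hpb : forall u v, u <> v -> gp (act (ev a b u) o) (act (ev a b v) o) o <= c).
  { intros u v Huv. destruct u; destruct v; try congruence; simpl ev; unfold a, b;
    rewrite ?gpow_inv_act, ?act_gpow; first [lra | rewrite gp_sym; lra]. }
  assert (HL : forall l, L <= d o (act (ev a b l) o)).
  { pose proof (lox_inf g lg Hlimg m Hm1). pose proof (lox_inf h lh Hlimh m Hm1).
    assert (L <= lg * INR m) by (unfold L; apply Rmult_le_compat_r; lra).
    assert (L <= lh * INR m) by (unfold L; apply Rmult_le_compat_r; lra).
    intros l. destruct l; simpl ev; unfold a, b;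
    rewrite ?gpow_inv_act, ?act_gpow; rewrite d_sym; rewrite ?d_inv_orbit; lra. }
  destruct (nat_big (2 / eps)) as [N0 HN0].
  set (N := S N0).
  assert (HN : 2 < eps * INR N).
  { assert (INR N0 <= INR N) by (apply le_INR; unfold N; lia).
    assert (2 / eps < INR N) by lra. apply (Rmult_lt_compat_l eps) in H0; [|lra].
    replace (eps * (2 / eps)) with 2 in H0 by (field; lra). lra. }
  assert (HN1 : (1 <= N)%nat) by (unfold N; lia).
  set (db := d (act b o) o).
  assert (Hdb : 0 <= db) by apply d_nn.
  set (K := INR N * db + c + 2 * delta).
  set (C := K + 2 * delta + 1).
  set (A := K + delta + 1).
  set (be := L - 2 * c - 2 * delta).
  assert (Hbe : 0 < be) by (unfold be; lra).
  exists C. intros D. pose proof (Rabs_pos D) as HDpos.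
  destruct (nat_big ((Rabs D + C + A + c + 4 * delta + K + 1) / be)) as [n0 Hn0].
  set (n := S n0).
  assert (Hn1 : (1 <= n)%nat) by (unfold n; lia).
  assert (Hnbe : Rabs D + C + A + c + 4 * delta + K + 1 < INR n * be).
  { assert (INR n0 <= INR n) by (apply le_INR; unfold n; lia).
    assert ((Rabs D + C + A + c + 4 * delta + K + 1) / be < INR n) by lra.
    apply (Rmult_lt_compat_l be) in H0; [|lra].
    replace (be * ((Rabs D + C + A + c + 4 * delta + K + 1) / be)) with (Rabs D + C + A + c + 4 * delta + K + 1) in H0 by (field; lra). lra. }
  assert (HKpos : 0 <= K) by (unfold K; pose proof (pos_INR N); pose proof (Rmult_le_pos _ _ (pos_INR N) Hdb); lra).
  set (sfun := fun i => mul (gpow mul one b i) (mul (gpow mul one a n) (gpow mul one (inv b) i))).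
  assert (Hs_act : forall i y, act (sfun i) y = it b i (it (ev a b La) n (it (inv b) i y))).
  { intros i y. unfold sfun. rewrite !act_mul, !act_gpow. reflexivity. }
  assert (Hsi_act : forall i y, act (inv (sfun i)) y = it b i (it (ev a b LA) n (it (inv b) i y))).
  { intros i y. set (z := it b i (it (ev a b LA) n (it (inv b) i y))).
    assert (Ez : act (sfun i) z = y).
    { rewrite Hs_act. unfold z. rewrite it_cancel'. simpl ev. rewrite it_cancel, it_cancel. reflexivity. }
    rewrite <- Ez. apply act_inv_l. }
  assert (Hpow : forall i k, act (gpow mul one (sfun i) k) o = Xp a b La i (k * n)).
  { intros i k. rewrite act_gpow. apply conj_it. apply Hs_act. }
  assert (HP : forall i, act (sfun i) o = Xp a b La i n) by (intros; apply Hs_act).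
  assert (HQ : forall i, act (inv (sfun i)) o = Xp a b LA i n) by (intros; apply Hsi_act).
  assert (PB : forall al, al = La \/ al = LA -> forall i j M M', (1 <= i <= N)%nat -> (1 <= j <= N)%nat ->
     i <> j -> (1 <= M)%nat -> (1 <= M')%nat -> gp (Xp a b al i M) (Xp a b al j M') o <= K).
  { intros al Hal i j M M' Hi Hj Hij HM HM'.
    assert (Hb : forall i', (i' <= N)%nat -> INR i' * db <= INR N * db).
    { intros i' Hi'. apply Rmult_le_compat_r; auto. apply le_INR; auto. }
    destruct (Nat.lt_gt_cases i j) as [[Hlt|Hlt] _]; [lia| |].
    - pose proof (pair_bound a b L c Hc HLc Hpb HL al Hal i j M M' ltac:(lia) Hlt HM HM').
      pose proof (Hb i ltac:(lia)). fold db in H. unfold K. lra.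
    - pose proof (pair_bound a b L c Hc HLc Hpb HL al Hal j i M' M ltac:(lia) Hlt HM' HM).
      pose proof (Hb j ltac:(lia)). fold db in H. rewrite gp_sym. unfold K. lra. }
  assert (DI : forall al, al = La \/ al = LA -> forall i, (1 <= i)%nat -> INR n * be <= d (Xp a b al i n) o).
  { intros al Hal i Hi.
    destruct (prefix_bound a b L c Hc HLc Hpb HL al Hal i n n Hi ltac:(lia)) as [_ [_ H3]].
    assert (INR n <= INR (i + n + i)) by (apply le_INR; lia).
    rewrite d_sym. fold be in H3. assert (INR n * be <= INR (i + n + i) * be) by (apply Rmult_le_compat_r; lra). lra. }
  assert (HLa : La = La \/ La = LA) by auto.
  assert (HLA : LA = La \/ LA = LA) by auto.
  assert (Hidx : forall s, In s (map sfun (seq 1 N)) -> exists i, s = sfun i /\ (1 <= i <= N)%nat).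
  { intros s Hs. apply in_map_iff in Hs. destruct Hs as [i [Ei Hi]]. apply in_seq in Hi.
    exists i. split; auto. lia. }
  assert (GEN : forall (Phi : G -> X -> X) (Pp Qq : nat -> X) x y,
     (forall i z w, d (Phi (sfun i) z) (Phi (sfun i) w) = d z w) ->
     (forall i, exists T', (forall z, Phi (sfun i) (T' z) = z) /\ T' o = Qq i) ->
     (forall i, Phi (sfun i) o = Pp i) ->
     (forall i, (1 <= i <= N)%nat -> INR n * be <= d (Pp i) o) ->
     (forall i j, (1 <= i <= N)%nat -> (1 <= j <= N)%nat -> i <> j -> gp (Pp i) (Pp j) o <= K) ->
     (forall i j, (1 <= i <= N)%nat -> (1 <= j <= N)%nat -> i <> j -> gp (Qq i) (Qq j) o <= K) ->
     (1 - eps) * INR N <= INR (length (filter (fun s => if Rle_dec (gp x (Phi s y) o) C then true else false)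
                                        (map sfun (seq 1 N))))).
  { intros Phi Pp Qq x y Hiso HT' HPp HD HPP HQQ.
    assert (Hex : exists i1 i2, forall i, (1 <= i <= N)%nat ->
       (if Rle_dec (gp x (Phi (sfun i) y) o) C then true else false) = false -> i = i1 \/ i = i2).
    { destruct (classic (exists i, (1 <= i <= N)%nat /\ A <= gp y (Qq i) o)) as [[i1 [Hi1 Ai1]]|Hne1];
      destruct (classic (exists i, (1 <= i <= N)%nat /\ C - delta < gp x (Pp i) o)) as [[i2 [Hi2 Ai2]]|Hne2];
      [exists i1, i2 | exists i1, 0%nat | exists 0%nat, i2 | exists 0%nat, 0%nat];
      intros i Hi Hbad; destruct (Rle_dec _ _) as [_|Hgt]; try discriminate; apply Rnot_le_lt in Hgt;
      destruct (HT' i) as [T' [HT'1 HT'2]];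
      (destruct (bad_split (Phi (sfun i)) T' x y C A (Hiso i) HT'1 ltac:(rewrite HPp; specialize (HD i Hi); lra) Hgt)
        as [B1|B2]; [rewrite HT'2 in B1 | rewrite HPp in B2]).
      - left. destruct (Nat.eq_dec i i1) as [E|E]; auto. exfalso.
        pose proof (HQQ i i1 Hi Hi1 E). rewrite gp_sym in B1.
        pose proof (four (Qq i) y (Qq i1) o A B1 Ai1). unfold A in *. lra.
      - right. destruct (Nat.eq_dec i i2) as [E|E]; auto. exfalso.
        pose proof (HPP i i2 Hi Hi2 E). rewrite gp_sym in B2.
        pose proof (four_lt (Pp i) x (Pp i2) o (C - delta) B2 Ai2). unfold C in *. lra.
      - left. destruct (Nat.eq_dec i i1) as [E|E]; auto. exfalso.
        pose proof (HQQ i i1 Hi Hi1 E). rewrite gp_sym in B1.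
        pose proof (four (Qq i) y (Qq i1) o A B1 Ai1). unfold A in *. lra.
      - exfalso. apply Hne2. exists i. auto.
      - exfalso. apply Hne1. exists i. auto.
      - right. destruct (Nat.eq_dec i i2) as [E|E]; auto. exfalso.
        pose proof (HPP i i2 Hi Hi2 E). rewrite gp_sym in B2.
        pose proof (four_lt (Pp i) x (Pp i2) o (C - delta) B2 Ai2). unfold C in *. lra.
      - exfalso. apply Hne1. exists i. auto.
      - exfalso. apply Hne2. exists i. auto. }
    destruct Hex as [i1 [i2 Hex]].
    pose proof (count_two sfun (fun s => if Rle_dec (gp x (Phi s y) o) C then true else false) N i1 i2 Hex).
    assert ((1 - eps) * INR N <= INR N - 2) by lra. lra. }
  exists (map sfun (seq 1 N)).
  split. { unfold N. simpl. discriminate. }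
  split.
  { apply NoDup_map_NoDup_ForallPairs; [|apply seq_NoDup].
    intros i j Hi Hj E. apply in_seq in Hi; apply in_seq in Hj.
    destruct (Nat.eq_dec i j) as [|Hne]; auto. exfalso.
    pose proof (PB La HLa i j n n ltac:(lia) ltac:(lia) Hne Hn1 Hn1) as H1.
    assert (E2 : Xp a b La i n = Xp a b La j n) by (rewrite <- (HP i), <- (HP j), E; reflexivity).
    rewrite <- E2, gp_self in H1. pose proof (DI La HLa i ltac:(lia)). unfold A, C in *. lra. }
  split.
  { intros s Hs. destruct (Hidx s Hs) as [i [-> Hi]].
    exists (INR (n * m) * lg). split. { apply Rmult_lt_0_compat; auto. apply lt_0_INR; nia. }
    set (z := it (inv b) i o).
    apply is_lim_seq_ext with (u := fun k => d (it g (k * (n * m)) z) z / INR k).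
    { intros k. f_equal. rewrite Hpow. unfold Xp. fold z.
      transitivity (d (it b i (it (ev a b La) (k * n) z)) (it b i z)).
      - rewrite it_iso. simpl ev. unfold a. rewrite it_gpow. f_equal. f_equal. lia.
      - unfold z. rewrite it_cancel. reflexivity. }
    apply lox_conj; auto. nia. }
  split.
  { split.
    - intros x y. split.
      + unfold count_le. rewrite length_map, length_seq. apply (GEN act (fun i => Xp a b La i n) (fun i => Xp a b LA i n) x y).
        * intros; apply act_iso.
        * intros i. exists (act (inv (sfun i))). split. intros; apply act_inv_r. apply HQ.
        * apply HP.
        * intros i Hi. apply DI; auto; lia.
        * intros i j Hi Hj Hij. apply PB; auto.
        * intros i j Hi Hj Hij. apply PB; auto.
      + unfold count_le. rewrite length_map, length_seq. apply (GEN (fun s => act (inv s)) (fun i => Xp a b LA i n) (fun i => Xp a b La i n) x y).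
        * intros; apply act_iso.
        * intros i. exists (act (sfun i)). split. intros; apply act_inv_l. apply HP.
        * apply HQ.
        * intros i Hi. apply DI; auto; lia.
        * intros i j Hi Hj Hij. apply PB; auto.
        * intros i j Hi Hj Hij. apply PB; auto.
    - intros s Hs. destruct (Hidx s Hs) as [i [-> Hi]]. rewrite HP, d_sym.
      pose proof (DI La HLa i ltac:(lia)). pose proof (Rle_abs D). unfold A, C in *. lra. }
  split.
  { intros s t Hs Ht Hst x [V1 V2].
    destruct (Hidx s Hs) as [i [-> Hi]]. destruct (Hidx t Ht) as [j [-> Hj]].
    assert (Hij : i <> j) by (intro E; apply Hst; rewrite E; reflexivity).
    destruct (vc_near (fun k => act (gpow mul one (sfun i) k) o) C x V1) as [N1 HN1'].
    destruct (vc_near (fun k => act (gpow mul one (sfun j) k) o) C x V2) as [N2 HN2'].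
    set (k := Nat.max 1 (Nat.max N1 N2)).
    specialize (HN1' k ltac:(lia)). specialize (HN2' k ltac:(lia)). cbv beta in HN1', HN2'.
    rewrite Hpow in HN1', HN2'.
    pose proof (PB La HLa i j (k * n)%nat (k * n)%nat Hi Hj Hij ltac:(nia) ltac:(nia)).
    rewrite gp_sym in HN1'.
    pose proof (four _ x _ o (C - 1 / 2 - delta) HN1' HN2'). unfold C in *. lra. }
  intros s Hs. destruct (Hidx s Hs) as [i [-> Hi]].
  assert (CONV : forall M, exists N', forall k k', (N' <= k)%nat -> (N' <= k')%nat ->
     M <= gp (act (gpow mul one (sfun i) k) o) (act (gpow mul one (sfun i) k') o) o).
  { intros M. destruct (nat_big ((M + c + 3 * delta) / be)) as [N' HN']. exists (S N').
    intros k k' Hk Hk'. rewrite !Hpow.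
    assert (F : forall k1 k2, (S N' <= k1)%nat -> (k1 <= k2)%nat -> M <= gp (Xp a b La i (k1 * n)) (Xp a b La i (k2 * n)) o).
    { intros k1 k2 H1 H2.
      pose proof (prefix_lower a b L c La i (k1 * n)%nat (k2 * n)%nat Hc HLc Hpb HL HLa ltac:(lia) ltac:(nia) ltac:(nia)) as P1.
      fold be in P1.
      assert (INR (S N') <= INR (i + k1 * n)) by (apply le_INR; nia).
      assert (INR (S N') * be <= INR (i + k1 * n) * be) by (apply Rmult_le_compat_r; lra).
      assert (INR N' < INR (S N')) by (apply lt_INR; lia).
      assert (Q3 : (M + c + 3 * delta) / be < INR (S N')) by lra.
      apply (Rmult_lt_compat_l be) in Q3; [|lra].
      replace (be * ((M + c + 3 * delta) / be)) with (M + c + 3 * delta) in Q3 by (field; lra).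
      lra. }
    destruct (Nat.le_ge_cases k k'); [apply F; auto | rewrite gp_sym; apply F; auto]. }
  apply (vc_from (fun k => act (gpow mul one (sfun i) k) o)).
  - split; [exact CONV | exact CONV].
  - intros k Hk. cbv beta. rewrite Hpow, HP.
    pose proof (prefix_lower a b L c La i n (k * n)%nat Hc HLc Hpb HL HLa ltac:(lia) Hn1 ltac:(nia)) as P1.
    fold be in P1.
    assert (INR n <= INR (i + n)) by (apply le_INR; lia).
    assert (INR n * be <= INR (i + n) * be) by (apply Rmult_le_compat_r; lra).
    unfold A, C in *. lra.
Qed.
End Main.

Theorem lemma5p4 (X G : Type) (d : X -> X -> R) (delta : R)
  (mul : G -> G -> G) (one : G) (inv : G -> G) (act : G -> X -> X) (o : X) :
  is_metric d -> geodesic d -> hyperbolic d delta ->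
  is_group mul one inv -> isometric_action d mul one act ->
  non_elementary d mul one inv act o ->
  forall eps : R, 0 < eps < 1 ->
  exists C : R, forall D : R,
    exists S : list G,
      S <> nil /\ NoDup S /\
      (forall s, In s S -> loxodromic d mul one act o s) /\
      schottky d inv act o eps C D S /\
      (forall s t, In s S -> In t S -> s <> t ->
         forall x, ~ (VC d o C (gplus d mul one act o s) x /\
                      VC d o C (gplus d mul one act o t) x)) /\
      (forall s, In s S -> VC d o (C + delta) (gplus d mul one act o s) (act s o)).
Proof.
  intros Hm _ Hh Hg Ha Hne.
  exact (main_result d delta mul one inv act o Hm Hh Hg Ha Hne).
Qed.
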